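(* Consider the stochastic epidemic model described in the context under the linear control policy $u(k)=K\,I(k)$, $k\ge 0$, with a constant gain $K$. Suppose $$\delta_{\max}<\frac{v_{\min}(1-d_{\max})}{v_{\max}}\qquad\text{and}\qquad \frac{\delta_{\max}}{v_{\min}}<K<\frac{1-d_{\max}}{v_{\max}}.$$ Then: (i) $\lim_{k\to\infty} I(k)/I_0=0$ with probability one; (ii) $I(k)<I_0$ for all $k\ge 1$ with probability one. Moreover, if $K=\delta_{\max}/v_{\min}$, then $I(k)\le I_0$ for all $k$ with probability one.
   Context: Time is indexed by days $k=0,1,2,\dots$. Let $(\delta(k))_{k\ge0}$, $(d_I(k))_{k\ge0}$, $(v(k))_{k\ge0}$ be three mutually independent sequences of random variables, each sequence i.i.d. in $k$, with $0\le \delta(k)\le \delta_{\max}$, $0\le d_I(k)\le d_{\max}$ where $d_{\max}<1$, and $0<v_{\min}\le v(k)\le v_{\max}\le 1$; moreover $\delta_{\max}$ lies in the support of $\delta(k)$, $d_{\max}$ in the support of $d_I(k)$, and $v_{\min},v_{\max}$ in the support of $v(k)$. Given a control sequence $u(k)\ge 0$, the susceptible, infected, recovered and deceased cases evolve by $S(k+1)=S(k)-\delta(k)I(k)$, $I(k+1)=(1+\delta(k))I(k)-v(k)u(k)-d_I(k)I(k)$, $R(k+1)=R(k)+v(k)u(k)$, $D(k+1)=D(k)+d_I(k)I(k)$, with initial values $S(0)=S_0$, $I(0)=I_0>0$, $R(0)=D(0)=0$, where $I_0\delta_{\max}<S_0$. *)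

(* Defs.v *)
From HB Require Import structures.
From mathcomp Require Import all_boot all_order all_algebra.
From mathcomp Require Import all_classical all_reals all_analysis.
Set Implicit Arguments. Unset Strict Implicit. Unset Printing Implicit Defensive.
Import Order.TTheory GRing.Theory Num.Theory.
Import numFieldNormedType.Exports.
Local Open Scope classical_set_scope.
Local Open Scope ring_scope.

Record sird (R : Type) := SIRD { St : R; It : R; Rt : R; Dt : R }.

Fixpoint sird_traj (T : Type) (R : pzRingType) (delta dI v : nat -> T -> R)
    (pol : R -> R) (S0 I0 : R) (k : nat) (w : T) : sird R :=
  match k with
  | 0 => SIRD S0 I0 0 0
  | k'.+1 =>
    let x := sird_traj delta dI v pol S0 I0 k' w in
    let u := pol (It x) in
    SIRD (St x - delta k' w * It x)
         ((1 + delta k' w) * It x - v k' w * u - dI k' w * It x)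
         (Rt x + v k' w * u)
         (Dt x + dI k' w * It x)
  end.

Definition infected (T : Type) (R : pzRingType) (delta dI v : nat -> T -> R)
    (K S0 I0 : R) (k : nat) (w : T) : R :=
  It (sird_traj delta dI v (fun i => K * i) S0 I0 k w).

Definition epi_family (T : Type) (R : Type) (delta dI v : nat -> T -> R)
    (p : nat * 'I_3) : T -> R :=
  if val p.2 == 0%N then delta p.1 else if val p.2 == 1%N then dI p.1 else v p.1.

Definition mutually_independent d (T : measurableType d) (R : realType)
    (P : probability T R) (I : eqType) (X : I -> T -> R) : Prop :=
  forall (J : seq I) (B : I -> set R), uniq J ->
    (forall i, measurable (B i)) ->
    P (\bigcap_(i in [set` J]) (X i @^-1` B i)) =
    (\prod_(i <- J) P (X i @^-1` B i))%E.

Definition ident_distr d (T : measurableType d) (R : realType)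
    (P : probability T R) (X : nat -> T -> R) : Prop :=
  forall (k : nat) (B : set R), measurable B ->
    P (X k @^-1` B) = P (X 0%N @^-1` B).

Definition in_support d (T : measurableType d) (R : realType)
    (P : probability T R) (X : T -> R) (a : R) : Prop :=
  forall e : R, 0 < e -> (0 < P [set w | (`|X w - a| < e)%R])%E.

(* Main.v *)
Require Import Defs.
From HB Require Import structures.
From mathcomp Require Import all_boot all_order all_algebra.
From mathcomp Require Import all_classical all_reals all_analysis.
From mathcomp Require Import ring lra.
Import Order.TTheory GRing.Theory Num.Theory.
Import numFieldNormedType.Exports.
Local Open Scope classical_set_scope.
Local Open Scope ring_scope.

Lemma infected_step (T : Type) (R : comPzRingType) (delta dI v : nat -> T -> R)
    (K S0 I0 : R) k w :
  infected delta dI v K S0 I0 k.+1 w =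
  (1 + delta k w - v k w * K - dI k w) * infected delta dI v K S0 I0 k w.
Proof. rewrite /infected /=; ring. Qed.

Lemma geo_bound (R : realFieldType) (I a : nat -> R) (q : R) :
  0 <= I 0%N -> (forall k, 0 <= a k <= q) -> (forall k, I k.+1 = a k * I k) ->
  forall k, 0 <= I k <= q ^+ k * I 0%N.
Proof.
move=> I00 ha hI; elim=> [|k /andP [IH1 IH2]]; first by rewrite expr0 mul1r lexx I00.
have [a0 aq] := andP (ha k).
rewrite hI exprS -mulrA; apply/andP; split; first exact: mulr_ge0.
apply: (le_trans (ler_wpM2l a0 IH2)).
apply: ler_wpM2r => //; apply: mulr_ge0 => //; apply: exprn_ge0; exact: le_trans a0 aq.
Qed.

Theorem theorem1 (d : measure_display) (T : measurableType d) (R : realType)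
    (P : probability T R) (delta dI v : nat -> T -> R)
    (delta_max d_max v_min v_max S0 I0 : R) :
  (forall k, measurable_fun setT (delta k)) ->
  (forall k, measurable_fun setT (dI k)) ->
  (forall k, measurable_fun setT (v k)) ->
  mutually_independent P (epi_family delta dI v) ->
  ident_distr P delta -> ident_distr P dI -> ident_distr P v ->
  (forall k w, 0 <= delta k w <= delta_max) ->
  (forall k w, 0 <= dI k w <= d_max) ->
  d_max < 1 ->
  (forall k w, v_min <= v k w <= v_max) ->
  0 < v_min -> v_max <= 1 ->
  (forall k, in_support P (delta k) delta_max) ->
  (forall k, in_support P (dI k) d_max) ->
  (forall k, in_support P (v k) v_min) ->
  (forall k, in_support P (v k) v_max) ->
  0 < I0 -> I0 * delta_max < S0 ->
  delta_max < v_min * (1 - d_max) / v_max ->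
  (forall K : R, delta_max / v_min < K < (1 - d_max) / v_max ->
     {ae P, forall w,
        (fun k => infected delta dI v K S0 I0 k w / I0) @ \oo --> (0 : R)}
     /\
     {ae P, forall w, forall k : nat, (1 <= k)%N ->
        infected delta dI v K S0 I0 k w < I0})
  /\
  {ae P, forall w, forall k : nat,
     infected delta dI v (delta_max / v_min) S0 I0 k w <= I0}.
Proof.
move=> _ _ _ _ _ _ _ hdel hdI hdm hv hvmin hvmax _ _ _ _ hI0 _ hdmax.
have key : forall K w, 0 <= K -> (forall k, 0 <= 1 + delta k w - v k w * K - dI k w) ->
    forall k, 0 <= infected delta dI v K S0 I0 k w <=
      (1 + delta_max - v_min * K) ^+ k * I0.
  move=> K w K0 ha k.
  have := @geo_bound R (fun k => infected delta dI v K S0 I0 k w)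
    (fun k => 1 + delta k w - v k w * K - dI k w) (1 + delta_max - v_min * K).
  apply => //; first by rewrite /infected /= ltW.
    move=> j; rewrite ha /=.
    have [d0 d1] := andP (hdel j w); have [e0 e1] := andP (hdI j w).
    have [v0 v1] := andP (hv j w).
    have : v_min * K <= v j w * K by apply: ler_wpM2r.
    lra.
  move=> j; exact: infected_step.
have dm0 : 0 <= delta_max.
  by have /andP [h1 h2] := hdel 0%N (point : T); apply: le_trans h2.
have dI0 : 0 <= d_max.
  by have /andP [h1 h2] := hdI 0%N (point : T); apply: le_trans h2.
have vM0 : 0 < v_max.
  by have /andP [h1 h2] := hv 0%N (point : T); apply: lt_le_trans h2; apply: lt_le_trans h1.
have ha : forall K w, 0 <= K -> K * v_max < 1 - d_max ->
    forall k, 0 <= 1 + delta k w - v k w * K - dI k w.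
  move=> K w K0 hK k.
  have [d0 d1] := andP (hdel k w); have [e0 e1] := andP (hdI k w).
  have [v0 v1] := andP (hv k w).
  have : v k w * K <= v_max * K by apply: ler_wpM2r.
  lra.
split.
  move=> K /andP [hK1 hK2].
  have hq1 : delta_max < v_min * K by rewrite mulrC -ltr_pdivrMr.
  have hK0 : 0 < K.
    have : 0 < v_min * K by apply: le_lt_trans hq1.
    by rewrite pmulr_rgt0.
  have hK2' : K * v_max < 1 - d_max by rewrite -ltr_pdivlMr.
  have hvK : v_min * K <= v_max * K.
    apply: ler_wpM2r; first exact: ltW.
    by have /andP [h1 h2] := hv 0%N (point : T); apply: le_trans h2.
  set q := 1 + delta_max - v_min * K.
  have q0 : 0 <= q by rewrite /q; lra.
  have q1 : q < 1 by rewrite /q; lra.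
  split; apply: aeW => w.
    have kb := key K w (ltW hK0) (ha K w (ltW hK0) hK2').
    apply: (@squeeze_cvgr _ _ _ _ (fun=> 0) (fun k => q ^+ k)).
    - apply: nearW => k /=.
      have /andP [k1 k2] := kb k.
      rewrite divr_ge0 ?(ltW hI0) //= ler_pdivrMr //.
    - exact: cvg_cst.
    - by apply: cvg_expr; rewrite ger0_norm.
  move=> k k1.
  have /andP [_ k2] := key K w (ltW hK0) (ha K w (ltW hK0) hK2') k.
  apply: (le_lt_trans k2).
  by rewrite gtr_pMl // exprn_ilt1 // -lt0n.
apply: aeW => w k.
set K := delta_max / v_min.
have K0 : 0 <= K by rewrite /K divr_ge0 // ltW.
have hK : v_min * K = delta_max by rewrite /K mulrC divfK // gt_eqF.
have hK2 : K * v_max < 1 - d_max.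
  have h : delta_max * v_max < v_min * (1 - d_max) by rewrite -ltr_pdivlMr.
  rewrite -hK in h.
  have : v_min * (K * v_max) < v_min * (1 - d_max) by rewrite mulrA.
  by rewrite ltr_pM2l.
have /andP [_ k2] := key K w K0 (ha K w K0 hK2) k.
by move: k2; rewrite hK addrK expr1n mul1r.
Qed.
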